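(* Let $b\ge2$ be an integer, $\lambda\in(1/b,1)$, and let $\phi$ be a $\mathbb{Z}$-periodic Lipschitz function such that $W=W^\phi_{\lambda,b}$ is not Lipschitz. Then every $C^2$-regulating period of $W$ is a rational number.
   Context: $W^\phi_{\lambda,b}(x)=\sum_{n\ge0}\lambda^n\phi(b^nx)$. For $k\in\mathbb{Z}_+$, $t\in\mathbb{R}$ is a $C^k$-regulating period of $W$ if $x\mapsto W(x+t)-W(x)$ is a $C^k$ function. *)

(* Defs.v *)
From Stdlib Require Import Reals.
From Coquelicot Require Import Coquelicot.
Open Scope R_scope.

Definition W (phi : R -> R) (lambda b : R) (x : R) : R :=
  Series (fun n : nat => lambda ^ n * phi (b ^ n * x)).

Definition Zperiodic (f : R -> R) : Prop := forall x, f (x + 1) = f x.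

Definition Lipschitz (f : R -> R) : Prop :=
  exists L : R, forall x y, Rabs (f x - f y) <= L * Rabs (x - y).

Definition Ck (k : nat) (f : R -> R) : Prop :=
  (forall n x, (n <= k)%nat -> ex_derive_n f n x) /\
  (forall x, continuous (Derive_n f k) x).

Definition regulating_period (k : nat) (g : R -> R) (t : R) : Prop :=
  Ck k (fun x => g (x + t) - g x).

Definition is_rational (t : R) : Prop :=
  exists (p : Z) (q : Z), q <> 0%Z /\ t = IZR p / IZR q.

(* Main.v *)
Require Import Defs.
From Stdlib Require Import Reals Lra Lia ZArith List Permutation Classical.
From Coquelicot Require Import Coquelicot.
Open Scope R_scope.

Lemma per_nat (f : R -> R) : (forall x, f (x + 1) = f x) ->
  forall (n : nat) x, f (x + INR n) = f x.
Proof.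
  intros H n; induction n as [|n IH]; intro x.
  - simpl; rewrite Rplus_0_r; reflexivity.
  - rewrite S_INR. replace (x + (INR n + 1)) with ((x + INR n) + 1) by ring.
    rewrite H; apply IH.
Qed.

Lemma per_Z (f : R -> R) : (forall x, f (x + 1) = f x) ->
  forall (z : Z) x, f (x + IZR z) = f x.
Proof.
  intros H z x. destruct (Z_le_gt_dec 0 z) as [Hz|Hz].
  - rewrite <- (Z2Nat.id z Hz), <- INR_IZR_INZ. apply per_nat; auto.
  - assert (Hz' : (0 <= - z)%Z) by lia.
    rewrite <- (per_nat f H (Z.to_nat (- z)) (x + IZR z)).
    rewrite INR_IZR_INZ, (Z2Nat.id _ Hz'), opp_IZR. f_equal; ring.
Qed.

Lemma per_red (f : R -> R) : (forall x, f (x + 1) = f x) ->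
  forall y, exists z, 0 <= z <= 1 /\ f y = f z.
Proof.
  intros H y. destruct (base_Int_part y) as [H1 H2].
  exists (y - IZR (Int_part y)). split; [lra|].
  rewrite <- (per_Z f H (Int_part y) (y - IZR (Int_part y))). f_equal; ring.
Qed.

Lemma lip_of_deriv (f df : R -> R) (K : R) :
  (forall x, is_derive f x (df x)) -> (forall x, Rabs (df x) <= K) ->
  forall x y, Rabs (f x - f y) <= K * Rabs (x - y).
Proof.
  intros Hd Hb x y.
  destruct (MVT_gen f y x df) as [c [_ Hc]].
  - intros; apply Hd.
  - intros z _. apply continuity_pt_filterlim.
    exact (ex_derive_continuous f z (ex_intro _ _ (Hd z))).
  - rewrite Hc, Rabs_mult. apply Rmult_le_compat_r; [apply Rabs_pos|apply Hb].
Qed.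

Lemma Derive_per (f : R -> R) : (forall x, f (x + 1) = f x) ->
  forall x, Derive f (x + 1) = Derive f x.
Proof.
  intros H x. unfold Derive. f_equal. apply Lim_ext. intro h.
  replace (x + 1 + h) with ((x + h) + 1) by ring. rewrite !H. reflexivity.
Qed.

Lemma Derive_n_per (f : R -> R) : (forall x, f (x + 1) = f x) ->
  forall n x, Derive_n f n (x + 1) = Derive_n f n x.
Proof.
  intros H n; induction n as [|n IH]; intro x; simpl.
  - apply H.
  - apply Derive_per. exact IH.
Qed.

Fixpoint fsum (f : nat -> R) (n : nat) : R :=
  match n with O => 0 | S n => fsum f n + f n end.

Lemma fsum_ext f g n : (forall k, (k < n)%nat -> f k = g k) -> fsum f n = fsum g n.
Proof. induction n; simpl; intros; [reflexivity|]. rewrite IHn by (intros; apply H; lia). rewrite H by lia; reflexivity. Qed.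

Lemma fsum_minus f g n : fsum (fun k => f k - g k) n = fsum f n - fsum g n.
Proof. induction n; simpl; [ring|]. rewrite IHn; ring. Qed.

Lemma fsum_scal c f n : fsum (fun k => c * f k) n = c * fsum f n.
Proof. induction n; simpl; [ring|]. rewrite IHn; ring. Qed.

Lemma fsum_abs f g n : (forall k, (k < n)%nat -> Rabs (f k) <= g k) -> Rabs (fsum f n) <= fsum g n.
Proof.
  induction n; simpl; intros H. - rewrite Rabs_R0; lra.
  - eapply Rle_trans; [apply Rabs_triang|]. apply Rplus_le_compat.
    + apply IHn; intros; apply H; lia. + apply H; lia.
Qed.

Lemma fsum_const c n : fsum (fun _ => c) n = INR n * c.
Proof. induction n; simpl fsum; [simpl; ring|]. rewrite IHn, S_INR; ring. Qed.

Lemma fsum_tele (f : nat -> R) n : fsum (fun k => f (S k) - f k) n = f n - f O.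
Proof. induction n; simpl; [ring|]. rewrite IHn; ring. Qed.

Lemma fsum_derive (F : nat -> R -> R) (dF : nat -> R -> R) n x :
  (forall k, is_derive (F k) x (dF k x)) ->
  is_derive (fun y => fsum (fun k => F k y) n) x (fsum (fun k => dF k x) n).
Proof.
  intro H. induction n; simpl.
  - apply (is_derive_const 0).
  - apply (is_derive_plus (fun y => fsum (fun k => F k y) n) (F n)); auto.
Qed.

Lemma fold_Rplus_acc (l : list R) a : fold_right Rplus a l = fold_right Rplus 0 l + a.
Proof. induction l; simpl; [ring|]. rewrite IHl; ring. Qed.

Lemma fsum_list f n : fsum f n = fold_right Rplus 0 (map f (seq 0 n)).
Proof.
  induction n; [reflexivity|]. rewrite seq_S, map_app, fold_right_app. simpl.
  rewrite IHn, (fold_Rplus_acc _ (f n + 0)). ring.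
Qed.

Lemma fold_perm (l l' : list R) : Permutation l l' -> fold_right Rplus 0 l = fold_right Rplus 0 l'.
Proof. induction 1; simpl; try congruence; try ring. Qed.

Lemma fsum_reindex (G : nat -> R) (s : nat -> nat) n :
  (forall k, (k < n)%nat -> (s k < n)%nat) ->
  (forall k1 k2, (k1 < n)%nat -> (k2 < n)%nat -> s k1 = s k2 -> k1 = k2) ->
  fsum (fun k => G (s k)) n = fsum G n.
Proof.
  intros Hr Hi. rewrite !fsum_list.
  replace (map (fun k => G (s k)) (seq 0 n)) with (map G (map s (seq 0 n)))
    by (rewrite map_map; reflexivity).
  apply fold_perm, Permutation_map, NoDup_Permutation_bis.
  - apply NoDup_map_NoDup_ForallPairs; [|apply seq_NoDup].
    intros a c Ha Hc. apply in_seq in Ha, Hc. apply Hi; lia.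
  - rewrite !length_map; lia.
  - intros y Hy. apply in_map_iff in Hy as [k [<- Hk]]. apply in_seq in Hk.
    apply in_seq. specialize (Hr k). lia.
Qed.


Lemma pigeon (N : nat) (f : nat -> nat) : (forall k, (k <= N)%nat -> (f k < N)%nat) ->
  exists i j, (i < j <= N)%nat /\ f i = f j.
Proof.
  intro Hf. apply NNPP; intro Hn.
  assert (HD : NoDup (map f (seq 0 (S N)))).
  { apply NoDup_map_NoDup_ForallPairs; [|apply seq_NoDup].
    intros a c Ha Hc Hac. apply in_seq in Ha, Hc.
    destruct (Nat.lt_trichotomy a c) as [H|[H|H]]; auto; exfalso; apply Hn.
    - exists a, c; split; [lia|auto].
    - exists c, a; split; [lia|auto]. }
  assert (HI : incl (map f (seq 0 (S N))) (seq 0 N)).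
  { intros y Hy. apply in_map_iff in Hy as [k [<- Hk]]. apply in_seq in Hk.
    apply in_seq. specialize (Hf k). lia. }
  pose proof (NoDup_incl_length HD HI) as HL. rewrite length_map, !length_seq in HL. lia.
Qed.

Lemma int_part_unique_close a b : Int_part a = Int_part b -> Rabs (a - b) < 1.
Proof.
  intro E. destruct (base_Int_part a), (base_Int_part b). rewrite E in *.
  apply Rabs_def1; lra.
Qed.

Lemma int_part_range v n : 0 <= v < IZR n -> (0 <= Int_part v < n)%Z.
Proof.
  intro Hv. destruct (base_Int_part v) as [H1 H2]. split.
  - apply lt_IZR in H2 || idtac. apply le_IZR. apply Rnot_lt_le; intro Hc.
    apply lt_IZR in Hc. assert (Hm : (Int_part v <= -1)%Z) by lia.
    apply IZR_le in Hm. lra.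
  - apply lt_IZR. lra.
Qed.

Lemma dirichlet0 (t : R) (N : nat) : (1 <= N)%nat ->
  exists q p : Z, (1 <= q <= Z.of_nat N)%Z /\ Rabs (IZR q * t - IZR p) < / INR N.
Proof.
  intro HN.
  set (fr := fun y => y - IZR (Int_part y)).
  assert (Hfr : forall y, 0 <= fr y < 1).
  { intro y; unfold fr; destruct (base_Int_part y); lra. }
  assert (HNpos : 0 < INR N) by (apply lt_0_INR; lia).
  set (f := fun k : nat => Z.to_nat (Int_part (INR N * fr (INR k * t)))).
  destruct (pigeon N f) as [i [j [Hij Heq]]].
  { intros k _. unfold f. set (v := INR N * fr (INR k * t)).
    assert (Hv : 0 <= v < IZR (Z.of_nat N)) by (rewrite <- INR_IZR_INZ; unfold v; destruct (Hfr (INR k * t)); nra).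
    apply int_part_range in Hv. lia. }
  exists (Z.of_nat j - Z.of_nat i)%Z, (Int_part (INR j * t) - Int_part (INR i * t))%Z.
  split; [lia|].
  unfold f in Heq.
  assert (E : Int_part (INR N * fr (INR i * t)) = Int_part (INR N * fr (INR j * t))).
  { assert (Hi : 0 <= INR N * fr (INR i * t) < IZR (Z.of_nat N)) by (rewrite <- INR_IZR_INZ; destruct (Hfr (INR i * t)); nra).
    assert (Hj : 0 <= INR N * fr (INR j * t) < IZR (Z.of_nat N)) by (rewrite <- INR_IZR_INZ; destruct (Hfr (INR j * t)); nra).
    apply int_part_range in Hi, Hj.
    apply (f_equal Z.of_nat) in Heq. rewrite !Z2Nat.id in Heq by lia. exact Heq. }
  apply int_part_unique_close in E.
  rewrite minus_IZR, minus_IZR, <- !INR_IZR_INZ.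
  replace ((INR j - INR i) * t - (IZR (Int_part (INR j * t)) - IZR (Int_part (INR i * t))))
    with (- (fr (INR i * t) - fr (INR j * t))) by (unfold fr; ring).
  rewrite Rabs_Ropp.
  replace (INR N * fr (INR i * t) - INR N * fr (INR j * t)) with (INR N * (fr (INR i * t) - fr (INR j * t))) in E by ring.
  rewrite Rabs_mult, (Rabs_right (INR N)) in E by lra.
  apply (Rmult_lt_reg_l (INR N)); [lra|]. rewrite Rinv_r by lra. exact E.
Qed.

Lemma dirichlet (t : R) (N : nat) : (1 <= N)%nat ->
  exists q p : Z, (1 <= q <= Z.of_nat N)%Z /\ Z.gcd p q = 1%Z /\
    Rabs (IZR q * t - IZR p) < / INR N.
Proof.
  intro HN. destruct (dirichlet0 t N HN) as [q [p [Hq Hd]]].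
  set (g := Z.gcd p q).
  assert (Hg0 : (0 < g)%Z).
  { pose proof (Z.gcd_nonneg p q). assert (g <> 0%Z) by (intro Hc; apply Z.gcd_eq_0_r in Hc; lia). unfold g in *; lia. }
  assert (Ep : p = (g * (p / g))%Z) by (apply Znumtheory.Zdivide_Zdiv_eq; [lia|apply Z.gcd_divide_l]).
  assert (Eq : q = (g * (q / g))%Z) by (apply Znumtheory.Zdivide_Zdiv_eq; [lia|apply Z.gcd_divide_r]).
  exists (q / g)%Z, (p / g)%Z. split; [|split].
  - split; [|apply Z.div_le_upper_bound; nia].
    destruct (Z_le_gt_dec 1 (q/g)); auto. assert (q / g <= 0)%Z by lia. nia.
  - apply Z.gcd_div_gcd; [lia|reflexivity].
  - eapply Rle_lt_trans; [|exact Hd]. rewrite Ep, Eq at 2.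
    rewrite !mult_IZR.
    replace (IZR g * IZR (q / g) * t - IZR g * IZR (p / g)) with
      (IZR g * (IZR (q / g) * t - IZR (p / g))) by ring.
    rewrite Rabs_mult. assert (1 <= IZR g) by (apply IZR_le; lia).
    rewrite (Rabs_right (IZR g)) by lra.
    pose proof (Rabs_pos (IZR (q / g) * t - IZR (p / g))). nra.
Qed.


Lemma koksma (u u' : R -> R) (A t : R) (q p : Z) :
  (forall x, u (x + 1) = u x) -> (forall x, is_derive u x (u' x)) ->
  (forall x y, Rabs (u' x - u' y) <= A * Rabs (x - y)) ->
  (1 <= q)%Z -> Z.gcd p q = 1%Z -> Rabs (IZR q * t - IZR p) <= / IZR q ->
  forall x, Rabs (fsum (fun k => u' (x + INR k * t)) (Z.to_nat q)) <= 2 * A.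
Proof.
  intros Hper Hd HL Hq Hg Hqt x.
  set (n := Z.to_nat q).
  assert (EQ : IZR q = INR n) by (unfold n; rewrite INR_IZR_INZ, Z2Nat.id by lia; reflexivity).
  set (Q := IZR q) in *.
  assert (HQ : 1 <= Q) by (unfold Q; apply IZR_le; lia).
  assert (HA : 0 <= A).
  { specialize (HL 1 0). rewrite Rminus_0_r, Rabs_R1 in HL. pose proof (Rabs_pos (u' 1 - u' 0)). lra. }
  set (r := fun k : nat => Z.to_nat ((Z.of_nat k * p) mod q)).
  set (G := fun j : nat => u (x + (INR j + 1) / Q) - u (x + INR j / Q)).
  assert (Hsum : fsum (fun k => G (r k)) n = 0).
  { rewrite fsum_reindex.
    - unfold G. rewrite (fsum_ext _ (fun k => (fun j => u (x + INR j / Q)) (S k) - (fun j => u (x + INR j / Q)) k)).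
      + rewrite (fsum_tele (fun j => u (x + INR j / Q))). simpl. rewrite <- EQ. unfold Rdiv. rewrite Rinv_r by lra.
        rewrite Rmult_0_l, Rplus_0_r, Hper. ring.
      + intros k _. rewrite S_INR. reflexivity.
    - intros k _. unfold r. pose proof (Z.mod_pos_bound (Z.of_nat k * p) q ltac:(lia)). lia.
    - intros k1 k2 H1 H2 E. unfold r in E.
      pose proof (Z.mod_pos_bound (Z.of_nat k1 * p) q ltac:(lia)).
      pose proof (Z.mod_pos_bound (Z.of_nat k2 * p) q ltac:(lia)).
      apply (f_equal Z.of_nat) in E. rewrite !Z2Nat.id in E by lia.
      pose proof (Z.div_mod (Z.of_nat k1 * p) q ltac:(lia)).
      pose proof (Z.div_mod (Z.of_nat k2 * p) q ltac:(lia)).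
      assert (Hdv : (q | p * (Z.of_nat k1 - Z.of_nat k2))%Z).
      { exists ((Z.of_nat k1 * p) / q - (Z.of_nat k2 * p) / q)%Z. lia. }
      apply Z.gauss in Hdv; [|rewrite Z.gcd_comm; exact Hg].
      destruct Hdv as [c Hc]. unfold n in *.
      assert (Z.of_nat k1 < q)%Z by lia. assert (Z.of_nat k2 < q)%Z by lia.
      destruct (Z.lt_trichotomy c 0) as [Hc0|[Hc0|Hc0]]; [nia| |nia]. subst c. lia. }
  assert (Hterm : forall k, (k < n)%nat -> Rabs (u' (x + INR k * t) - Q * G (r k)) <= 2 * A / Q).
  { intros k Hk.
    set (a := x + IZR (Z.of_nat k * p) / Q).
    assert (EG : G (r k) = u (a + / Q) - u a).
    { unfold G, r, a.
      pose proof (Z.mod_pos_bound (Z.of_nat k * p) q ltac:(lia)).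
      pose proof (Z.div_mod (Z.of_nat k * p) q ltac:(lia)) as Ed.
      set (m := ((Z.of_nat k * p) mod q)%Z) in *.
      set (d := ((Z.of_nat k * p) / q)%Z) in *.
      rewrite INR_IZR_INZ, Z2Nat.id by lia.
      rewrite Ed, plus_IZR, mult_IZR. fold Q.
      rewrite <- (per_Z u Hper d (x + (IZR m + 1) / Q)).
      rewrite <- (per_Z u Hper d (x + IZR m / Q)).
      f_equal; f_equal; field; lra. }
    destruct (MVT_gen u a (a + / Q) u') as [c [Hc Hmvt]].
    { intros; apply Hd. }
    { intros z _. apply continuity_pt_filterlim.
      exact (ex_derive_continuous u z (ex_intro _ _ (Hd z))). }
    assert (Hinv : 0 < / Q) by (apply Rinv_0_lt_compat; lra).
    rewrite Rmin_left, Rmax_right in Hc by lra.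
    rewrite EG, Hmvt.
    replace (Q * (u' c * (a + / Q - a))) with (u' c) by (field; lra).
    eapply Rle_trans; [apply HL|].
    assert (Hk' : 0 <= INR k <= Q) by (rewrite EQ; split; [apply pos_INR| apply le_INR; lia]).
    assert (E1 : x + INR k * t - c = INR k / Q * (Q * t - IZR p) - (c - a)).
    { unfold a. rewrite mult_IZR, <- INR_IZR_INZ. field. lra. }
    rewrite E1.
    assert (Rabs (INR k / Q * (Q * t - IZR p)) <= / Q).
    { rewrite Rabs_mult. rewrite Rabs_right.
      2: { apply Rle_ge, Rmult_le_pos; [lra|left; apply Rinv_0_lt_compat; lra]. }
      assert (INR k / Q <= 1) by (apply Rmult_le_reg_r with Q; [lra|]; field_simplify; lra).
      pose proof (Rabs_pos (Q * t - IZR p)).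
      assert (0 <= INR k / Q) by (apply Rmult_le_pos; lra).
      nra. }
    assert (Rabs (c - a) <= / Q) by (apply Rabs_le; lra).
    pose proof (Rabs_triang (INR k / Q * (Q * t - IZR p)) (- (c - a))).
    rewrite Rabs_Ropp in H1.
    unfold Rdiv. replace (2 * A * / Q) with (A * (/Q + /Q)) by ring.
    apply Rmult_le_compat_l; [lra|]. unfold Rminus at 1. lra. }
  replace (fsum (fun k => u' (x + INR k * t)) n) with
    (fsum (fun k => u' (x + INR k * t) - Q * G (r k)) n + Q * fsum (fun k => G (r k)) n).
  2: { rewrite fsum_minus, <- (fsum_scal Q (fun k => G (r k))). ring. }
  rewrite Hsum, Rmult_0_r, Rplus_0_r.
  eapply Rle_trans; [apply fsum_abs; exact Hterm|].
  rewrite fsum_const, <- EQ. right; field; lra.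
Qed.


Lemma is_derive_shift (u u' : R -> R) c x :
  (forall y, is_derive u y (u' y)) -> is_derive (fun y => u (y + c)) x (u' (x + c)).
Proof.
  intro Hd. assert (H := is_derive_comp u (fun y => y + c) x (u' (x + c)) 1 (Hd (x + c))).
  assert (Hg : is_derive (fun y : R => y + c) x 1).
  { auto_derive; auto; ring. }
  specialize (H Hg). simpl in H. unfold scal in H; simpl in H. unfold mult in H; simpl in H.
  rewrite Rmult_1_l in H. exact H.
Qed.

Lemma bernoulli (a : R) (n : nat) : 0 <= a -> 1 + INR n * a <= (1 + a) ^ n.
Proof.
  intro Ha. induction n; [simpl; lra|]. rewrite S_INR. change ((1 + a) ^ S n) with ((1 + a) * (1 + a) ^ n).
  assert (0 <= INR n * a) by (apply Rmult_le_pos; [apply pos_INR|lra]). nra.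
Qed.

Section Weier.
Variables (b : nat) (lambda : R) (phi : R -> R) (L : R).
Hypothesis Hb : (2 <= b)%nat.
Hypothesis Hlam : / INR b < lambda < 1.
Hypothesis Hper : Zperiodic phi.
Hypothesis HL : forall x y, Rabs (phi x - phi y) <= L * Rabs (x - y).

Let B := INR b.
Let Wf := W phi lambda B.

Lemma B_ge2 : 2 <= B.
Proof. unfold B. replace 2 with (INR 2) by (simpl; ring). apply le_INR; lia. Qed.

Lemma lam_pos : 0 < lambda.
Proof. pose proof B_ge2. assert (0 < / B) by (apply Rinv_0_lt_compat; lra). unfold B in *; lra. Qed.

Lemma lamB : 1 < lambda * B.
Proof.
  pose proof B_ge2. destruct Hlam as [H1 _]. fold B in H1.
  apply (Rmult_lt_compat_r B) in H1; [|lra]. rewrite Rinv_l in H1 by lra. exact H1.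
Qed.

Lemma L_pos : 0 <= L.
Proof. specialize (HL 1 0). rewrite Rminus_0_r, Rabs_R1 in HL. pose proof (Rabs_pos (phi 1 - phi 0)). lra. Qed.

Let Mp := Rabs (phi 0) + L.

Lemma phi_bnd : forall y, Rabs (phi y) <= Mp.
Proof.
  intro y. destruct (per_red phi Hper y) as [z [Hz E]]. rewrite E.
  pose proof (HL z 0). pose proof L_pos.
  assert (Rabs (z - 0) <= 1) by (rewrite Rminus_0_r, Rabs_right; lra).
  pose proof (Rabs_triang_inv (phi z) (phi 0)). unfold Mp. nra.
Qed.

Lemma Mp_pos : 0 <= Mp.
Proof. unfold Mp. pose proof (Rabs_pos (phi 0)). pose proof L_pos. lra. Qed.

Lemma abs_lam : Rabs lambda < 1.
Proof. pose proof lam_pos. rewrite Rabs_right by lra. lra. Qed.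

Lemma ex_ser_abs x : ex_series (fun n => Rabs (lambda ^ n * phi (B ^ n * x))).
Proof.
  apply (ex_series_le (V := R_CompleteNormedModule)) with (fun n => Mp * lambda ^ n).
  - intro n. change (norm (Rabs (lambda ^ n * phi (B ^ n * x)))) with (Rabs (Rabs (lambda ^ n * phi (B ^ n * x)))).
    rewrite Rabs_Rabsolu, Rabs_mult, Rmult_comm. pose proof lam_pos.
    rewrite (Rabs_right (lambda ^ n)) by (apply Rle_ge, pow_le; lra).
    apply Rmult_le_compat_r; [apply pow_le; lra|apply phi_bnd].
  - eexists. apply (is_series_scal_l Mp (fun n => lambda ^ n)). apply is_series_geom, abs_lam.
Qed.

Lemma ex_ser x : ex_series (fun n => lambda ^ n * phi (B ^ n * x)).
Proof. apply ex_series_Rabs, ex_ser_abs. Qed.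

Let Mw := Mp / (1 - lambda).

Lemma W_bnd x : Rabs (Wf x) <= Mw.
Proof.
  unfold Wf, W. eapply Rle_trans; [apply Series_Rabs, ex_ser_abs|].
  pose proof lam_pos.
  assert (Hs : is_series (fun n => Mp * lambda ^ n) (Mp * / (1 - lambda))).
  { apply (is_series_scal_l Mp (fun n => lambda ^ n)). apply is_series_geom, abs_lam. }
  unfold Mw, Rdiv. rewrite <- (is_series_unique _ _ Hs).
  apply Series_le.
  - intro n. split; [apply Rabs_pos|]. rewrite Rabs_mult, Rmult_comm.
    rewrite (Rabs_right (lambda ^ n)) by (apply Rle_ge, pow_le; lra).
    apply Rmult_le_compat_r; [apply pow_le; lra|apply phi_bnd].
  - eexists; exact Hs.
Qed.

Lemma W_per x : Wf (x + 1) = Wf x.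
Proof.
  unfold Wf, W. apply Series_ext. intro n. f_equal.
  replace (B ^ n * (x + 1)) with (B ^ n * x + INR (b ^ n)) by (rewrite pow_INR; unfold B; ring).
  apply per_nat. exact Hper.
Qed.

Lemma W_self x : Wf x = phi x + lambda * Wf (B * x).
Proof.
  unfold Wf, W. rewrite Series_incr_1 by apply ex_ser. simpl.
  rewrite Rmult_1_l, Rmult_1_l. f_equal.
  rewrite <- Series_scal_l. apply Series_ext. intro n.
  rewrite Rmult_assoc. f_equal. f_equal. f_equal. ring.
Qed.

Lemma W_iter N x : Wf x = fsum (fun n => lambda ^ n * phi (B ^ n * x)) N + lambda ^ N * Wf (B ^ N * x).
Proof.
  induction N; simpl.
  - rewrite Rmult_1_l, Rmult_1_l. ring.
  - rewrite IHN, (W_self (B ^ N * x)).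
    replace (B * B ^ N * x) with (B * (B ^ N * x)) by ring. ring.
Qed.


Lemma Mw_pos : 0 <= Mw.
Proof. unfold Mw. pose proof Mp_pos. apply Rmult_le_pos; [lra|]. left; apply Rinv_0_lt_compat. lra. Qed.

Lemma W_uc : forall eps, 0 < eps -> exists eta, 0 < eta /\
  forall x r, Rabs r < eta -> Rabs (Wf (x + r) - Wf x) < eps.
Proof.
  intros eps He. pose proof Mw_pos. pose proof lam_pos. pose proof L_pos. pose proof B_ge2.
  assert (Hp : 0 < eps / (2 * (2 * Mw + 1))) by (apply Rdiv_lt_0_compat; lra).
  destruct (pow_lt_1_zero lambda abs_lam _ Hp) as [N HN].
  specialize (HN N (le_n N)). rewrite Rabs_right in HN by (apply Rle_ge, pow_le; lra).
  set (SN := fsum (fun n => lambda ^ n * L * B ^ n) N).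
  assert (HSN : 0 <= SN).
  { assert (Hall : forall M, 0 <= fsum (fun n => lambda ^ n * L * B ^ n) M); [|apply Hall].
    induction M; simpl; [lra|]. pose proof (pow_le lambda M ltac:(lra)) as Q1.
    pose proof (pow_le B M ltac:(lra)) as Q2. assert (Q3 : 0 <= lambda ^ M * L) by (apply Rmult_le_pos; lra).
    pose proof (Rmult_le_pos _ _ Q3 Q2). lra. }
  exists (eps / (2 * (SN + 1))). split; [apply Rdiv_lt_0_compat; lra|].
  intros x r Hr.
  rewrite (W_iter N (x + r)), (W_iter N x).
  replace (fsum (fun n => lambda ^ n * phi (B ^ n * (x + r))) N + lambda ^ N * Wf (B ^ N * (x + r)) -
     (fsum (fun n => lambda ^ n * phi (B ^ n * x)) N + lambda ^ N * Wf (B ^ N * x))) with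
    (fsum (fun n => lambda ^ n * phi (B ^ n * (x + r)) - lambda ^ n * phi (B ^ n * x)) N +
     lambda ^ N * (Wf (B ^ N * (x + r)) - Wf (B ^ N * x))) by (rewrite fsum_minus; ring).
  eapply Rle_lt_trans; [apply Rabs_triang|].
  assert (G1 : Rabs (fsum (fun n => lambda ^ n * phi (B ^ n * (x + r)) - lambda ^ n * phi (B ^ n * x)) N)
     <= SN * Rabs r).
  { unfold SN. rewrite Rmult_comm, <- fsum_scal. apply fsum_abs. intros k _.
    rewrite <- Rmult_minus_distr_l, Rabs_mult, (Rabs_right (lambda ^ k)) by (apply Rle_ge, pow_le; lra).
    eapply Rle_trans. { apply Rmult_le_compat_l; [apply pow_le; lra|apply HL]. }
    replace (B ^ k * (x + r) - B ^ k * x) with (B ^ k * r) by ring.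
    rewrite Rabs_mult, (Rabs_right (B ^ k)) by (apply Rle_ge, pow_le; lra). right; ring. }
  assert (G2 : Rabs (lambda ^ N * (Wf (B ^ N * (x + r)) - Wf (B ^ N * x))) <= lambda ^ N * (2 * Mw)).
  { rewrite Rabs_mult, (Rabs_right (lambda ^ N)) by (apply Rle_ge, pow_le; lra).
    apply Rmult_le_compat_l; [apply pow_le; lra|].
    eapply Rle_trans; [apply Rabs_triang|]. rewrite Rabs_Ropp. pose proof (W_bnd (B ^ N * (x + r))).
    pose proof (W_bnd (B ^ N * x)). lra. }
  assert (G3 : SN * Rabs r <= SN * (eps / (2 * (SN + 1)))) by (apply Rmult_le_compat_l; lra).
  assert (G4 : SN * (eps / (2 * (SN + 1))) < eps / 2).
  { apply (Rmult_lt_reg_r (2 * (SN + 1))); [lra|]. field_simplify; nra. }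
  assert (G5 : lambda ^ N * (2 * Mw) <= eps / (2 * (2 * Mw + 1)) * (2 * Mw)) by (apply Rmult_le_compat_r; lra).
  assert (G6 : eps / (2 * (2 * Mw + 1)) * (2 * Mw) < eps / 2).
  { apply (Rmult_lt_reg_r (2 * (2 * Mw + 1))); [lra|]. field_simplify; nra. }
  lra.
Qed.

Lemma mult_bound_nat d c : (forall x, Rabs (Wf (x + d) - Wf x) <= c) ->
  forall (n : nat) x, Rabs (Wf (x + INR n * d) - Wf x) <= INR n * c.
Proof.
  intros Hc n; induction n; intro x.
  - simpl. rewrite Rmult_0_l, Rplus_0_r, Rminus_diag, Rabs_R0. lra.
  - rewrite S_INR. replace (x + (INR n + 1) * d) with ((x + INR n * d) + d) by ring.
    replace (Wf (x + INR n * d + d) - Wf x) with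
      ((Wf (x + INR n * d + d) - Wf (x + INR n * d)) + (Wf (x + INR n * d) - Wf x)) by ring.
    eapply Rle_trans; [apply Rabs_triang|]. specialize (Hc (x + INR n * d)). specialize (IHn x). lra.
Qed.

Lemma mult_bound d c : (forall x, Rabs (Wf (x + d) - Wf x) <= c) ->
  forall (m : Z) x, Rabs (Wf (x + IZR m * d) - Wf x) <= Rabs (IZR m) * c.
Proof.
  intros Hc m x. destruct (Z_le_gt_dec 0 m) as [Hm|Hm].
  - rewrite <- (Z2Nat.id m Hm), <- INR_IZR_INZ. rewrite (Rabs_right (INR (Z.to_nat m))) by (apply Rle_ge, pos_INR).
    apply mult_bound_nat; auto.
  - assert (Hm' : (0 <= - m)%Z) by lia.
    pose proof (mult_bound_nat d c Hc (Z.to_nat (- m)) (x + IZR m * d)) as G.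
    rewrite INR_IZR_INZ, (Z2Nat.id _ Hm'), opp_IZR in G.
    replace (x + IZR m * d + - IZR m * d) with x in G by ring.
    rewrite Rabs_minus_sym. rewrite (Rabs_left (IZR m)) by (apply IZR_lt; lia). exact G.
Qed.

Lemma scaling h K : (forall x y, Rabs ((Wf (x + h) - Wf x) - (Wf (y + h) - Wf y)) <= K * Rabs (x - y)) ->
  forall x, Rabs (Wf (x + h) - Wf x) <= (lambda * K * B ^ 2 + L) / (lambda * B - 1) * Rabs h.
Proof.
  intros HK. set (Dh := fun x => Wf (x + h) - Wf x).
  change (forall x y, Rabs (Dh x - Dh y) <= K * Rabs (x - y)) in HK.
  change (forall x, Rabs (Dh x) <= (lambda * K * B ^ 2 + L) / (lambda * B - 1) * Rabs h).
  pose proof lam_pos. pose proof L_pos. pose proof B_ge2. pose proof lamB. pose proof Mw_pos.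
  assert (HK0 : 0 <= K).
  { specialize (HK 1 0). rewrite Rminus_0_r, Rabs_R1 in HK. pose proof (Rabs_pos (Dh 1 - Dh 0)). lra. }
  set (C := (lambda * K * B ^ 2 + L) / (lambda * B - 1)).
  assert (HC0 : 0 <= C).
  { unfold C. apply Rmult_le_pos; [|left; apply Rinv_0_lt_compat; lra].
    assert (0 <= lambda * K * B ^ 2) by (apply Rmult_le_pos; [apply Rmult_le_pos|apply pow_le]; lra). lra. }
  assert (HCe : C * (lambda * B - 1) = lambda * K * B ^ 2 + L) by (unfold C; field; lra).
  assert (Htel : forall x, Wf (x + B * h) - Wf x = fsum (fun j => Dh (x + INR j * h)) b).
  { intro x. rewrite (fsum_ext _ (fun j => Wf (x + INR (S j) * h) - Wf (x + INR j * h))).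
    - rewrite (fsum_tele (fun j => Wf (x + INR j * h))). simpl. rewrite Rmult_0_l, Rplus_0_r. reflexivity.
    - intros k _. unfold Dh. rewrite S_INR. f_equal. f_equal. ring. }
  assert (Hcmp : forall x, Rabs ((Wf (x + B * h) - Wf x) - B * Dh x) <= K * B ^ 2 * Rabs h).
  { intro x. rewrite Htel. replace (B * Dh x) with (fsum (fun _ => Dh x) b) by (rewrite fsum_const; reflexivity). rewrite <- fsum_minus.
    eapply Rle_trans. { apply (fsum_abs _ (fun _ => K * B * Rabs h)). intros k Hk.
      eapply Rle_trans; [apply HK|]. replace (x + INR k * h - x) with (INR k * h) by ring.
      rewrite Rabs_mult, Rabs_right by (apply Rle_ge, pos_INR).
      assert (INR k <= B) by (unfold B; apply le_INR; lia).
      pose proof (Rabs_pos h).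
      rewrite <- Rmult_assoc. apply Rmult_le_compat_r; [lra|]. apply Rmult_le_compat_l; lra. }
    rewrite fsum_const. fold B. right; ring. }
  assert (Hrel : forall y, lambda * (Wf (B * y + B * h) - Wf (B * y)) = Dh y - (phi (y + h) - phi y)).
  { intro y. unfold Dh. rewrite (W_self (y + h)), (W_self y).
    replace (B * (y + h)) with (B * y + B * h) by ring. ring. }
  assert (Hstep : forall x e, C * Rabs h + e <= Rabs (Dh x) ->
     C * Rabs h + lambda * B * e <= Rabs (Dh (x / B))).
  { intros x e He. specialize (Hrel (x / B)).
    replace (B * (x / B)) with x in Hrel by (field; lra).
    specialize (Hcmp x). specialize (HL (x / B + h) (x / B)).
    replace (x / B + h - x / B) with h in HL by ring.
    assert (A1 : lambda * Rabs (Wf (x + B * h) - Wf x) <= Rabs (Dh (x / B)) + L * Rabs h).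
    { rewrite <- (Rabs_right lambda) by lra. rewrite <- Rabs_mult, Hrel.
      eapply Rle_trans; [apply Rabs_triang|]. rewrite Rabs_Ropp. lra. }
    assert (A2 : B * Rabs (Dh x) - K * B ^ 2 * Rabs h <= Rabs (Wf (x + B * h) - Wf x)).
    { pose proof (Rabs_triang_inv (B * Dh x) (B * Dh x - (Wf (x + B * h) - Wf x))).
      replace (B * Dh x - (B * Dh x - (Wf (x + B * h) - Wf x))) with (Wf (x + B * h) - Wf x) in H4 by ring.
      rewrite Rabs_minus_sym in H4. rewrite Rabs_mult, (Rabs_right B) in H4 by lra. lra. }
    assert (A3 : lambda * (B * Rabs (Dh x) - K * B ^ 2 * Rabs h) <= lambda * Rabs (Wf (x + B * h) - Wf x))
      by (apply Rmult_le_compat_l; lra).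
    assert (A4 : lambda * B * (C * Rabs h + e) <= lambda * B * Rabs (Dh x))
      by (apply Rmult_le_compat_l; [nra|lra]).
    nra. }
  assert (Hiter : forall x e, C * Rabs h + e <= Rabs (Dh x) -> forall n, exists y,
     C * Rabs h + (lambda * B) ^ n * e <= Rabs (Dh y)).
  { intros x e He n. induction n.
    - exists x. simpl. lra.
    - destruct IHn as [y Hy]. exists (y / B). simpl.
      replace ((lambda * B) * (lambda * B) ^ n * e) with (lambda * B * ((lambda * B) ^ n * e)) by ring.
      apply Hstep. exact Hy. }
  intro x. apply Rnot_lt_le. intro Hx. fold C in Hx.
  set (e := Rabs (Dh x) - C * Rabs h).
  assert (He : 0 < e) by (unfold e; lra).
  set (r := 2 * Mw / ((lambda * B - 1) * e)).
  assert (Hr : 0 <= r) by (unfold r; apply Rmult_le_pos; [lra|left; apply Rinv_0_lt_compat; nra]).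
  destruct (archimed r) as [Hu _].
  set (n := Z.to_nat (up r)).
  assert (Hn : r < INR n).
  { unfold n. rewrite INR_IZR_INZ, Z2Nat.id; [lra|]. apply le_IZR. lra. }
  destruct (Hiter x e (ltac:(unfold e; lra)) n) as [y Hy].
  pose proof (bernoulli (lambda * B - 1) n ltac:(lra)) as Hbern.
  replace (1 + (lambda * B - 1)) with (lambda * B) in Hbern by ring.
  assert (Hy2 : Rabs (Dh y) <= 2 * Mw).
  { unfold Dh. eapply Rle_trans; [apply Rabs_triang|]. rewrite Rabs_Ropp.
    pose proof (W_bnd (y + h)). pose proof (W_bnd y). lra. }
  assert (Hnr : r * ((lambda * B - 1) * e) = 2 * Mw) by (unfold r; field; nra).
  assert (INR n * ((lambda * B - 1) * e) > 2 * Mw) by (rewrite <- Hnr; apply Rmult_lt_compat_r; nra).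
  assert ((1 + INR n * (lambda * B - 1)) * e <= (lambda * B) ^ n * e) by (apply Rmult_le_compat_r; lra).
  pose proof (Rmult_le_pos _ _ HC0 (Rabs_pos h)).
  nra.
Qed.

Lemma key t : regulating_period 2 Wf t -> ~ is_rational t -> Lipschitz Wf.
Proof.
  intros [Hex Hcont] Hirr.
  set (u := fun x => Wf (x + t) - Wf x) in *.
  pose proof lam_pos as P1. pose proof L_pos as P2. pose proof B_ge2 as P3. pose proof lamB as P4.
  assert (Hup : forall x, u (x + 1) = u x).
  { intro x. unfold u. replace (x + 1 + t) with ((x + t) + 1) by ring. rewrite !W_per. reflexivity. }
  assert (Hd1 : forall x, is_derive u x (Derive u x)).
  { intro x. apply Derive_correct. exact (Hex 1%nat x ltac:(lia)). }
  assert (Hd2 : forall x, is_derive (Derive u) x (Derive_n u 2 x)).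
  { intro x. apply Derive_correct. exact (Hex 2%nat x ltac:(lia)). }
  assert (Hp2 := Derive_n_per u Hup 2).
  assert (Hc2 : forall c, 0 <= c <= 1 -> continuity_pt (Derive_n u 2) c).
  { intros c _. apply continuity_pt_filterlim. apply Hcont. }
  destruct (continuity_ab_maj _ 0 1 ltac:(lra) Hc2) as [Mx [HMx _]].
  destruct (continuity_ab_min _ 0 1 ltac:(lra) Hc2) as [mx [Hmx _]].
  set (A := Rmax (Rabs (Derive_n u 2 Mx)) (Rabs (Derive_n u 2 mx))).
  assert (HA0 : 0 <= A) by (unfold A; eapply Rle_trans; [apply Rabs_pos|apply Rmax_l]).
  assert (HA : forall y, Rabs (Derive_n u 2 y) <= A).
  { intro y. destruct (per_red _ Hp2 y) as [z [Hz E]]. rewrite E.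
    specialize (HMx z Hz). specialize (Hmx z Hz).
    pose proof (Rmax_l (Rabs (Derive_n u 2 Mx)) (Rabs (Derive_n u 2 mx))) as R1.
    pose proof (Rmax_r (Rabs (Derive_n u 2 Mx)) (Rabs (Derive_n u 2 mx))) as R2.
    pose proof (Rle_abs (Derive_n u 2 Mx)) as R3. pose proof (Rle_abs (- Derive_n u 2 mx)) as R4.
    rewrite Rabs_Ropp in R4. fold A in R1, R2. apply Rabs_le. lra. }
  assert (Hlip1 := lip_of_deriv (Derive u) (Derive_n u 2) A Hd2 HA).
  set (C := (lambda * (2 * A) * B ^ 2 + L) / (lambda * B - 1)).
  assert (HC0 : 0 <= C).
  { unfold C. apply Rmult_le_pos; [|left; apply Rinv_0_lt_compat; lra].
    assert (0 <= lambda * (2 * A) * B ^ 2) by (apply Rmult_le_pos; [apply Rmult_le_pos|apply pow_le]; lra). lra. }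
  exists C. intros x y.
  apply Rle_plus_epsilon. intros eps Heps.
  set (ep := eps / (C + 2)).
  assert (Hep : 0 < ep) by (unfold ep; apply Rdiv_lt_0_compat; lra).
  assert (Hep2 : (C + 1) * ep <= eps).
  { unfold ep. apply (Rmult_le_reg_r (C + 2)); [lra|]. field_simplify; nra. }
  destruct (W_uc ep Hep) as [eta [Heta Huc]].
  set (m0 := Rmin eta ep).
  assert (Hm0 : 0 < m0) by (unfold m0; apply Rmin_glb_lt; lra).
  destruct (archimed (/ m0)) as [Hup0 _].
  set (N := S (Z.to_nat (up (/ m0)))).
  assert (HNm : / INR N < m0).
  { assert (HN : / m0 < INR N).
    { unfold N. rewrite S_INR. destruct (Z_le_gt_dec 0 (up (/ m0))) as [Hz|Hz].
      - rewrite INR_IZR_INZ, Z2Nat.id by exact Hz. lra.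
      - assert (0 < / m0) by (apply Rinv_0_lt_compat; lra). apply IZR_lt in Hz || idtac.
        assert (IZR (up (/ m0)) < 0) by (apply IZR_lt; lia). lra. }
    assert (0 < / m0) by (apply Rinv_0_lt_compat; lra).
    rewrite <- (Rinv_inv m0). apply Rinv_lt_contravar; [nra|exact HN]. }
  destruct (dirichlet t N ltac:(unfold N; lia)) as [q [p [Hq [Hg Hd]]]].
  set (d := IZR q * t - IZR p).
  assert (Hd0 : d <> 0).
  { intro E. apply Hirr. exists p, q. split; [lia|]. unfold d in E.
    assert (IZR q <> 0) by (apply not_0_IZR; lia). apply (Rmult_eq_reg_r (IZR q)); [|auto]. unfold Rdiv; rewrite Rmult_assoc, Rinv_l, Rmult_1_r by auto. lra. }
  assert (Hdm : Rabs d < m0) by (unfold d; lra).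
  assert (Hdeta : Rabs d < eta) by (pose proof (Rmin_l eta ep); fold m0 in H; lra).
  assert (Hdep : Rabs d < ep) by (pose proof (Rmin_r eta ep); fold m0 in H; lra).
  assert (Hqd : Rabs d <= / IZR q).
  { unfold d. left. eapply Rlt_le_trans; [exact Hd|]. apply Rinv_le_contravar.
    - apply IZR_lt; lia.
    - rewrite INR_IZR_INZ. apply IZR_le; lia. }
  set (n := Z.to_nat q).
  assert (Hnq : INR n = IZR q) by (unfold n; rewrite INR_IZR_INZ, Z2Nat.id by lia; reflexivity).
  assert (Hkok := koksma u (Derive u) A t q p Hup Hd1 Hlip1 ltac:(lia) Hg Hqd).
  set (F := fun z => fsum (fun k => u (z + INR k * t)) n).
  assert (HFd : forall z, is_derive F z (fsum (fun k => Derive u (z + INR k * t)) n)).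
  { intro z. unfold F. apply (fsum_derive (fun k y => u (y + INR k * t)) (fun k y => Derive u (y + INR k * t))).
    intro k. apply is_derive_shift. exact Hd1. }
  assert (HFlip := lip_of_deriv F _ (2 * A) HFd Hkok).
  assert (HDF : forall z, Wf (z + d) - Wf z = F z).
  { intro z. unfold d. replace (z + (IZR q * t - IZR p)) with ((z + IZR q * t) + IZR (- p))
      by (rewrite opp_IZR; ring).
    rewrite (per_Z Wf W_per). unfold F.
    rewrite (fsum_ext _ (fun k => Wf (z + INR (S k) * t) - Wf (z + INR k * t))).
    - rewrite (fsum_tele (fun k => Wf (z + INR k * t))). simpl. rewrite Rmult_0_l, Rplus_0_r, Hnq. reflexivity.
    - intros k _. unfold u. rewrite S_INR. f_equal. f_equal. ring. }
  assert (Hsc := scaling d (2 * A) ltac:(intros x0 y0; rewrite !HDF; apply HFlip)).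
  fold C in Hsc.
  assert (Hmb := mult_bound d (C * Rabs d) Hsc).
  set (h := x - y).
  destruct (archimed (h / d)) as [Ha1 Ha2].
  set (m := (up (h / d) - 1)%Z).
  assert (Hm1 : IZR m <= h / d) by (unfold m; rewrite minus_IZR; simpl; lra).
  assert (Hm2 : h / d < IZR m + 1) by (unfold m; rewrite minus_IZR; simpl; lra).
  set (r := h - IZR m * d).
  assert (Hr : Rabs r < Rabs d).
  { assert (Er : r = d * (h / d - IZR m)) by (unfold r; field; auto).
    rewrite Er, Rabs_mult. rewrite (Rabs_right (h / d - IZR m)) by lra.
    assert (0 < Rabs d) by (apply Rabs_pos_lt; auto). nra. }
  assert (Hmd : Rabs (IZR m) * Rabs d <= Rabs h + Rabs d).
  { rewrite <- Rabs_mult. replace (IZR m * d) with (h - r) by (unfold r; ring).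
    eapply Rle_trans; [apply Rabs_triang|]. rewrite Rabs_Ropp. lra. }
  replace (Wf x - Wf y) with ((Wf ((y + IZR m * d) + r) - Wf (y + IZR m * d)) + (Wf (y + IZR m * d) - Wf y)).
  2: { replace (y + IZR m * d + r) with x by (unfold r, h; ring). ring. }
  eapply Rle_trans; [apply Rabs_triang|].
  assert (Q1 : Rabs (Wf (y + IZR m * d + r) - Wf (y + IZR m * d)) < ep) by (apply Huc; lra).
  assert (Q2 := Hmb m y).
  assert (Q3 : Rabs (IZR m) * (C * Rabs d) <= C * (Rabs h + ep)).
  { replace (Rabs (IZR m) * (C * Rabs d)) with (C * (Rabs (IZR m) * Rabs d)) by ring.
    apply Rmult_le_compat_l; lra. }
  fold h. nra.
Qed.

End Weier.


Theorem mainTheorem6 (b : nat) (lambda : R) (phi : R -> R) :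
  (2 <= b)%nat ->
  / INR b < lambda < 1 ->
  Zperiodic phi ->
  Lipschitz phi ->
  ~ Lipschitz (W phi lambda (INR b)) ->
  forall t : R, regulating_period 2 (W phi lambda (INR b)) t -> is_rational t.
Proof.
  intros Hb Hlam Hper [L HL] HnL t Ht. apply NNPP; intro Hirr. apply HnL.
  exact (key b lambda phi L Hb Hlam Hper HL t Ht Hirr).
Qed.
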